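(* Consider the discrete-time control system $x_{k+1}=f(x_k,u_k)$ with the reward $r(x,u)=R-x^TQx$ and the optimal value function $V_\gamma(x)=\sup_{\mathbf u}\sum_{k=0}^\infty\gamma^k r(\Psi(k,x,\mathbf u(k)),\mathbf u(k))$, under the standing assumptions (A1)–(A3) in the context. Then there exist $\alpha_1,\alpha_2\in\mathcal K_\infty$, a constant $\gamma^\star\in(0,1)$ and a constant $c>0$ such that for every $\gamma\in(\gamma^\star,1)$: (i) $\alpha_1(\|x\|)\le \frac{R}{1-\gamma}-V_\gamma(x)\le \alpha_2(\|x\|)$ for all $x\in\mathbb R^n$; and (ii) $V_\gamma(x)-V_\gamma(y)\le -c\|x\|^2$ for all $x\in\mathbb R^n$, where $y=f(x,u^\star_1(x))$ and $u^\star_1(x)$ is the first control input of an optimal control sequence $\mathbf u^\star$ for the initial condition $x$ (i.e. one attaining $V_\gamma(x)$).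
   Context: System: $x_{k+1}=f(x_k,u_k)$ with states $x_k\in\mathbb R^n$ (in the paper, in a compact convex set $D\subset\mathbb R^n$) and inputs $u_k\in\mathcal U\subset\mathbb R^m$; the origin is an equilibrium. For an infinite control sequence $\mathbf u=(u_1,u_2,\dots)$, $\Psi(k,x_0,\mathbf u(k))$ denotes the state at time $k$ starting from $x_0$ (flow map). (A1) $f$ is Lipschitz: $\|f(x,u)-f(y,w)\|\le L_x\|x-y\|+L_u\|u-w\|$. The reward is $r(x,u)=R-x^TQx$ with a constant $R>0$ and a positive definite matrix $Q$. For $\gamma\in(0,1)$ the discounted objective is $\mathbf J^{\mathbf u}_\gamma(x_0)=\sum_{k=0}^\infty \gamma^k r(\Psi(k,x_0,\mathbf u(k)),\mathbf u(k))$ and $V_\gamma(x_0)=\sup_{\mathbf u}\mathbf J^{\mathbf u}_\gamma(x_0)$. (A2) For every initial condition $x_0\in\mathbb R^n$ there exists a control sequence $\mathbf u^\star$ with $V_\gamma(x_0)=\mathbf J^{\mathbf u^\star}_\gamma(x_0)$. (A3) There is a constant $a_V$ such that $\frac{R}{1-\gamma}-V_\gamma(x)\le a_V\|x\|^2$ for all $\gamma\in(0,1)$ and $x\in\mathbb R^n$. A function $\alpha:\mathbb R_{\ge0}\to\mathbb R_{\ge0}$ is of class $\mathcal K_\infty$ if it is continuous, zero at zero, strictly increasing and unbounded. *)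

(* Defs.v *)
From HB Require Import structures.
From mathcomp Require Import all_boot all_order all_algebra.
From mathcomp Require Import all_classical all_reals all_analysis.
Set Implicit Arguments. Unset Strict Implicit. Unset Printing Implicit Defensive.
Import Order.TTheory GRing.Theory Num.Theory numFieldNormedType.Exports.
Local Open Scope classical_set_scope.
Local Open Scope ring_scope.

Definition enorm {R : realType} {p : nat} (x : 'rV[R]_p) : R :=
  Num.sqrt (\sum_(i < p) (x 0 i) ^+ 2).

(* quadratic form x^T Q x (x a row vector, so x Q x^T) *)
Definition qform {R : realType} {n : nat} (Q : 'M[R]_n) (x : 'rV[R]_n) : R :=
  (x *m Q *m x^T) 0 0.

Definition posdef {R : realType} {n : nat} (Q : 'M[R]_n) : Prop :=
  forall x : 'rV[R]_n, x != 0 -> 0 < qform Q x.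

Fixpoint Psi {R : realType} {n m : nat} (f : 'rV[R]_n -> 'rV[R]_m -> 'rV[R]_n)
  (k : nat) (x0 : 'rV[R]_n) (u : nat -> 'rV[R]_m) : 'rV[R]_n :=
  match k with
  | 0 => x0
  | k'.+1 => f (Psi f k' x0 u) (u k')
  end.

Definition reward {R : realType} {n m : nat} (Rc : R) (Q : 'M[R]_n)
  (x : 'rV[R]_n) (u : 'rV[R]_m) : R := Rc - qform Q x.

Definition admissible {R : realType} {m : nat} (U : set 'rV[R]_m) :
  set (nat -> 'rV[R]_m) := [set u | forall k, U (u k)].

Definition Jobj {R : realType} {n m : nat} (f : 'rV[R]_n -> 'rV[R]_m -> 'rV[R]_n)
  (Rc : R) (Q : 'M[R]_n) (g : R) (u : nat -> 'rV[R]_m) (x0 : 'rV[R]_n) : \bar R :=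
  (\sum_(0 <= k <oo) ((g ^+ k * reward Rc Q (Psi f k x0 u) (u k))%:E))%E.

Definition Vopt {R : realType} {n m : nat} (f : 'rV[R]_n -> 'rV[R]_m -> 'rV[R]_n)
  (U : set 'rV[R]_m) (Rc : R) (Q : 'M[R]_n) (g : R) (x0 : 'rV[R]_n) : \bar R :=
  ereal_sup [set Jobj f Rc Q g u x0 | u in admissible U].

Definition K_inf {R : realType} (a : R -> R) : Prop :=
  {within [set` `[0%R, +oo[%R], continuous a} /\ a 0 = 0 /\
  (forall s t, 0 <= s -> s < t -> a s < a t) /\
  (forall M : R, exists s, 0 <= s /\ M < a s).

(* Main.v *)
Require Import Defs.
From HB Require Import structures.
From mathcomp Require Import all_boot all_order all_algebra.
From mathcomp Require Import all_classical all_reals all_analysis.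
From mathcomp Require Import ring lra.
Import Order.TTheory GRing.Theory Num.Theory numFieldNormedType.Exports.
Local Open Scope classical_set_scope.
Local Open Scope ring_scope.

Lemma qformE (R : realType) n (Q : 'M[R]_n) x :
  qform Q x = \sum_(j < n) (\sum_(k < n) x 0 k * Q k j) * x 0 j.
Proof.
rewrite /qform !mxE; apply: eq_bigr => j _; rewrite !mxE.
by [].

Qed.

Lemma qformZ (R : realType) n (Q : 'M[R]_n) a x :
  qform Q (a *: x) = a ^+ 2 * qform Q x.
Proof.
rewrite !qformE big_distrr /=; apply: eq_bigr => j _.
rewrite mxE (eq_bigr (fun k => a * (x 0 k * Q k j))); last by move=> k _; rewrite mxE mulrA.
rewrite -mulr_sumr; ring.
Qed.

Lemma qform0 (R : realType) n (Q : 'M[R]_n) : qform Q 0 = 0.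
Proof. by rewrite -(scale0r 0) qformZ expr0n mul0r. Qed.

Lemma qform_ge0 (R : realType) n (Q : 'M[R]_n) x : posdef Q -> 0 <= qform Q x.
Proof.
move=> hQ; have [->|x0] := eqVneq x 0; first by rewrite qform0.
exact/ltW/hQ.
Qed.

Lemma sum_cont (R : realType) n (T : topologicalType) (F : 'I_n -> T -> R) :
  (forall i, continuous (F i)) -> continuous (fun x => \sum_(i < n) F i x).
Proof.
move=> hF; apply: continuous_big => //.
exact: add_continuous.
Qed.

Lemma qform_cont (R : realType) n (Q : 'M[R]_n) : continuous (qform Q).
Proof.
have -> : qform Q = fun x => \sum_(j < n) (\sum_(k < n) x 0 k * Q k j) * x 0 j.
  by apply/funext => x; rewrite qformE.
apply: sum_cont => j x; apply: continuousM; last exact: coord_continuous.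
move: x; apply: sum_cont => k y.
apply: continuousM; first exact: coord_continuous.
exact: cst_continuous.
Qed.

Lemma sq_cont (R : realType) n : continuous (fun x : 'rV[R]_n => \sum_(i < n) x 0 i ^+ 2).
Proof.
apply: sum_cont => i x; rewrite /GRing.exp /=.
apply: continuousM; exact: coord_continuous.
Qed.

Lemma sqsum_ge0 (R : realType) n (x : 'rV[R]_n) : 0 <= \sum_(i < n) x 0 i ^+ 2.
Proof. by apply: sumr_ge0 => i _; exact: sqr_ge0. Qed.

Lemma enorm_sq (R : realType) n (x : 'rV[R]_n) : enorm x ^+ 2 = \sum_(i < n) x 0 i ^+ 2.
Proof. by rewrite /enorm sqr_sqrtr // sqsum_ge0. Qed.

Lemma sqsumZ (R : realType) n (x : 'rV[R]_n) a :
  \sum_(i < n) (a *: x) 0 i ^+ 2 = a ^+ 2 * \sum_(i < n) x 0 i ^+ 2.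
Proof. by rewrite mulr_sumr; apply: eq_bigr => i _; rewrite mxE exprMn. Qed.

Lemma qlow (R : realType) n (Q : 'M[R]_n) : posdef Q ->
  exists2 lam, 0 < lam & forall x, lam * enorm x ^+ 2 <= qform Q x.
Proof.
move=> hQ.
pose A := [set x : 'rV[R]_n | \sum_(i < n) x 0 i ^+ 2 = 1].
have key : forall lam, (forall y, A y -> lam <= qform Q y) -> 0 <= lam ->
    forall x, lam * enorm x ^+ 2 <= qform Q x.
  move=> lam hl lam0 x; rewrite enorm_sq.
  set S := \sum_(i < n) x 0 i ^+ 2.
  have S0 : 0 <= S by exact: sqsum_ge0.
  have [->|Sp] := eqVneq S 0; first by rewrite mulr0 qform_ge0.
  have Sgt : 0 < S by rewrite lt_neqAle eq_sym Sp S0.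
  have sq : 0 < Num.sqrt S by rewrite sqrtr_gt0.
  have Ay : A ((Num.sqrt S)^-1 *: x).
    rewrite /A /= sqsumZ -/S exprVn sqr_sqrtr // mulVf //.
  have := hl _ Ay; rewrite qformZ exprVn sqr_sqrtr // => h.
  have -> : qform Q x = S * (S^-1 * qform Q x) by rewrite mulrA mulfV // mul1r.
  by rewrite mulrC ler_wpM2l.
have [An0|A0] := pselect (A !=set0); last first.
  exists 1 => //; apply: key => // y Ay; exfalso; apply: A0; by exists y.
have cA : compact A.
  apply: bounded_closed_compact.
    have hx : forall x, A x -> forall i j, `|x i j| <= 1.
      move=> x Ax i j.
      have : x i j ^+ 2 <= 1.
        rewrite -Ax (ord1 i) (bigD1 j) //= lerDl.
        by apply: sumr_ge0 => k _; exact: sqr_ge0.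
      rewrite -real_normK ?num_real // => h.
      have h0 := normr_ge0 (x i j).
      nra.
    rewrite /= /bounded_near; near=> M.
    have M1 : 1 <= M by near: M; apply: nbhs_pinfty_ge; exact: num_real.
    move=> x Ax /=.
    rewrite [leLHS]/Num.norm /= mx_normrE; apply: bigmax_le.
      by apply: le_trans M1.
    by move=> [i j] _ /=; apply: le_trans (hx x Ax i j) M1.
  have -> : A = (fun x : 'rV[R]_n => \sum_(i < n) x 0 i ^+ 2) @^-1` [set 1].
    by apply/funext => x.
  apply: preimage_closed; last exact: closed_eq.
  by move=> x _; exact: sq_cont.
have [c cA' cmin] := EVT_min_rV An0 cA (continuous_subspaceT (@qform_cont R n Q)).
have Ac : A c by rewrite inE in cA'.
have c0 : c != 0.
  apply/negP => /eqP c0; move: Ac; rewrite /A /= c0.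
  under eq_bigr do rewrite mxE.
  rewrite big1 => [|i _]; last by rewrite expr0n.
  by move/eqP; rewrite eq_sym oner_eq0.
exists (qform Q c); first exact: hQ.
apply: key; last exact: qform_ge0.
by move=> y Ay; apply: cmin; rewrite inE.
Unshelve. all: by end_near.
Qed.
Lemma eser_sub (R : realType) (a b : nat -> R) (c z : R) :
  (forall k, a k = c * z ^+ k - b k) -> (forall k, 0 <= b k) -> 0 <= z < 1 ->
  (\sum_(0 <= k <oo) (a k)%:E = (c / (1 - z))%:E - \sum_(0 <= k <oo) (b k)%:E)%E.
Proof.
move=> hab hb /andP[z0 z1].
have cb : cvgn (fun N => (\sum_(0 <= k < N) (b k)%:E)%E).
  by apply: is_cvg_ereal_nneg_natsum => k _; rewrite lee_fin.
apply: cvg_lim => //.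
have -> : (fun N => (\sum_(0 <= k < N) (a k)%:E)%E) =
    (fun N => ((series (geometric c z) N)%:E + - \sum_(0 <= k < N) (b k)%:E)%E).
  apply/funext => N; rewrite !sumEFin -EFinN -EFinD /series /=; congr (_%:E).
  by rewrite -sumrB; apply: eq_bigr => k _; rewrite hab.
apply: cvgeD; first exact: fin_num_adde_defr.
  apply/fine_cvgP; split; first exact: nearW.
  have := @cvg_geometric_series R c z; rewrite ger0_norm // => /(_ z1).
  by [].
by apply: cvgeN; exact: cb.
Qed.
Lemma eser_rec (R : realType) (a b : nat -> R) (c : R) :
  (forall k, a k.+1 = c * b k) -> (forall k, 0 <= b k) -> 0 <= c ->
  (\sum_(0 <= k <oo) (a k)%:E = (a 0%N)%:E + c%:E * \sum_(0 <= k <oo) (b k)%:E)%E.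
Proof.
move=> hab hb hc.
have cb : cvgn (fun N => (\sum_(0 <= k < N) (b k)%:E)%E).
  by apply: is_cvg_ereal_nneg_natsum => k _; rewrite lee_fin.
apply: cvg_lim => //.
rewrite -cvg_shiftS /=.
have -> : (fun N => (\sum_(0 <= k < N.+1) (a k)%:E)%E) =
    (fun N => ((a 0%N)%:E + c%:E * \sum_(0 <= k < N) (b k)%:E)%E).
  apply/funext => N; rewrite big_nat_recl //; congr (_ + _)%E.
  rewrite !sumEFin -EFinM mulr_sumr; congr (_%:E).
  by apply: eq_bigr => k _; rewrite hab.
apply: cvgeD; first exact: fin_num_adde_defr.
  exact: cvg_cst.
by apply: cvgeZl => //; exact: cb.
Qed.

Lemma Kinf_sq (R : realType) (k : R) : 0 < k -> K_inf (fun s => k * s ^+ 2).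
Proof.
move=> k0; split; [|split; [|split]].
- apply: continuous_subspaceT => s; apply: cvgM; first exact: cvg_cst.
  exact: exprn_continuous.
- by rewrite expr0n mulr0.
- move=> s t s0 st; rewrite ltr_pM2l //; nra.
- move=> M; exists (1 + `|M| / k); split.
    by rewrite addr_ge0 // divr_ge0 // ltW.
  have hM : M <= `|M| by exact: ler_norm.
  have hk : k * (`|M| / k) = `|M| by rewrite mulrC divfK // gt_eqF.
  have h0 : 0 <= `|M| / k by rewrite divr_ge0 // ltW.
  move: hk h0; set t := `|M| / k => hk h0.
  have h2 : 0 <= k * (t * t) by apply: mulr_ge0; [exact: ltW | exact: mulr_ge0].
  have -> : k * (1 + t) ^+ 2 = k + 2 * (k * t) + k * (t * t) by ring.
  rewrite hk; have := normr_ge0 M; lra.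
Qed.

Lemma Psi_shift (R : realType) n m (f : 'rV[R]_n -> 'rV[R]_m -> 'rV[R]_n) k x u :
  Psi f k.+1 x u = Psi f k (f x (u 0%N)) (fun j => u j.+1).
Proof. by elim: k => [|k IH] //=; rewrite -IH. Qed.

Theorem proposition1 (R : realType) (n m : nat)
  (f : 'rV[R]_n -> 'rV[R]_m -> 'rV[R]_n) (U : set 'rV[R]_m)
  (Rc : R) (Q : 'M[R]_n) (Lx Lu : R)
  (hRc : 0 < Rc) (hQ : posdef Q)
  (hequil : exists u0, U u0 /\ f 0 u0 = 0)
  (A1 : forall x y u w, U u -> U w ->
          enorm (f x u - f y w) <= Lx * enorm (x - y) + Lu * enorm (u - w))
  (A2 : forall g : R, 0 < g < 1 -> forall x0 : 'rV[R]_n,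
          exists2 ustar, admissible U ustar & Vopt f U Rc Q g x0 = Jobj f Rc Q g ustar x0)
  (A3 : exists aV : R, forall g : R, 0 < g < 1 -> forall x : 'rV[R]_n,
          ((Rc / (1 - g))%:E - Vopt f U Rc Q g x <= (aV * enorm x ^+ 2)%:E)%E) :
  exists (a1 a2 : R -> R) (gstar c : R),
    [/\ K_inf a1, K_inf a2, 0 < gstar < 1, 0 < c &
    forall g : R, gstar < g < 1 ->
      (forall x : 'rV[R]_n,
         ((a1 (enorm x))%:E <= (Rc / (1 - g))%:E - Vopt f U Rc Q g x)%E /\
         ((Rc / (1 - g))%:E - Vopt f U Rc Q g x <= (a2 (enorm x))%:E)%E) /\
      (forall (x : 'rV[R]_n) (ustar : nat -> 'rV[R]_m),
         admissible U ustar -> Vopt f U Rc Q g x = Jobj f Rc Q g ustar x ->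
         (Vopt f U Rc Q g x - Vopt f U Rc Q g (f x (ustar 0%N))
            <= (- (c * enorm x ^+ 2))%:E)%E)].
Proof.
have [lam lam0 hlam] := @qlow R n Q hQ.
have [aV haV] := A3.
pose a := Num.max aV 1.
have a1 : 1 <= a by rewrite le_max lexx orbT.
have aVa : aV <= a by rewrite le_max lexx.
have a0 : 0 < a by apply: lt_le_trans a1.
pose gs := Num.max (1/2) (1 - lam / (4 * a)).
have l4 : 0 < lam / (4 * a) by rewrite divr_gt0 // mulr_gt0.
exists (fun s => lam * s ^+ 2), (fun s => a * s ^+ 2), gs, (lam / 2).
split.
- exact: Kinf_sq.
- exact: Kinf_sq.
- apply/andP; split.
    by apply: lt_le_trans (_ : 1/2 <= gs); [lra | rewrite le_max lexx].
  by rewrite gt_max; apply/andP; split; lra.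
- by rewrite divr_gt0.
move=> g /andP[gsg g1].
move: gsg; rewrite gt_max => /andP[g2 g3].
have g0 : 0 < g by lra.
have hg : 0 < g < 1 by rewrite g0 g1.
pose B u x := (\sum_(0 <= k <oo) ((g ^+ k * qform Q (Psi f k x u))%:E))%E.
have HJ : forall u x, Jobj f Rc Q g u x = ((Rc / (1 - g))%:E - B u x)%E.
  move=> u x; rewrite /Jobj; apply: eser_sub.
  - by move=> k; rewrite /reward; ring.
  - by move=> k; apply: mulr_ge0; [apply: exprn_ge0; exact: ltW | exact: qform_ge0].
  - by rewrite (ltW g0) g1.
have HB : forall u x, B u x = ((qform Q x)%:E + g%:E * B (fun j => u j.+1) (f x (u 0%N)))%E.
  move=> u x; rewrite /B (@eser_rec _ _ (fun k => g ^+ k * qform Q (Psi f k (f x (u 0%N)) (fun j => u j.+1))) g).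
  - by rewrite expr0 mul1r.
  - by move=> k; rewrite Psi_shift exprS mulrA.
  - by move=> k; apply: mulr_ge0; [apply: exprn_ge0; exact: ltW | exact: qform_ge0].
  - exact: ltW.
have B0 : forall u x, (0 <= B u x)%E.
  move=> u x; rewrite /B; apply: nneseries_ge0 => k _ _; rewrite lee_fin.
  by apply: mulr_ge0; [apply: exprn_ge0; exact: ltW | exact: qform_ge0].
have Bq : forall u x, ((qform Q x)%:E <= B u x)%E.
  move=> u x; rewrite HB; apply: leeDl; apply: mule_ge0 => //.
  by rewrite lee_fin ltW.
split.
- move=> x; have [u adm hV] := A2 g hg x; split.
  + rewrite hV HJ; have := Bq u x; have := B0 u x.
    case: (B u x) => [b| |] //= hb hqb.
    * rewrite -!EFinB lee_fin; have := hlam x; rewrite lee_fin in hqb; lra.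
    * by rewrite addey ?leey.
  + apply: (le_trans (haV g hg x)); rewrite lee_fin.
    by apply: ler_wpM2r => //; exact: sqr_ge0.
move=> x u adm hV.
set y := f x (u 0%N); set u' := fun j => u j.+1.
have admu' : admissible U u' by move=> k; exact: adm.
have hx := haV g hg x.
rewrite hV HJ in hx.
have hB := HB u x.
have B0' := B0 u' y.
have Vy : (Jobj f Rc Q g u' y <= Vopt f U Rc Q g y)%E.
  by apply: ereal_sup_ubound; exists u'.
rewrite HJ in Vy.
have hq := hlam x.
rewrite hV HJ.
move: hx hB B0' Vy (B0 u x).
rewrite -/u' -/y.
case: (B u x) => [b| |]; case: (B u' y) => [b'| |] //=.
- move=> hx hB B0' Vy _.
  move: hB; rewrite -EFinM -EFinD => -[hB].
  rewrite -!EFinB lee_fin in hx.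
  rewrite lee_fin in B0'.
  case: (Vopt f U Rc Q g y) Vy => [v| |] //= Vy.
    rewrite -!EFinB lee_fin in Vy; rewrite -!EFinB lee_fin.
    set E := enorm x ^+ 2 in hx hq *.
    have E0 : 0 <= E by exact: sqr_ge0.
    have h0 : aV * E <= a * E by apply: ler_wpM2r.
    have q0 : 0 <= lam * E by apply: mulr_ge0 => //; exact: ltW.
    have h1 : g * b' <= a * E by lra.
    have h2 : b' <= 2 * (a * E) by nra.
    have h3 : (1 - g) * b' <= lam / (4 * a) * b' by apply: ler_wpM2r => //; lra.
    have h4 : lam / (4 * a) * (2 * (a * E)) = lam / 2 * E.
      by field; rewrite gt_eqF.
    have h5 : lam / (4 * a) * b' <= lam / (4 * a) * (2 * (a * E)).
      by apply: ler_wpM2l => //; exact: ltW.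
    lra.
  by rewrite addeNy leNye.
- by move=> _ hB _ _ _; exfalso; move: hB; rewrite gt0_muley ?lte_fin //.
Qed.
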